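(* There is no $(3,2)$-critical graph that contains exactly three odd cycles.
   Context: All graphs are finite and simple. An odd cycle is a cycle (subgraph) of odd length. For a graph $G$, ${\rm es}_{\chi}(G)$ is the minimum number of edges of $G$ whose removal results in a spanning subgraph $G_1$ with $\chi(G_1)=\chi(G)-1$. $G$ is edge-stability critical if ${\rm es}_{\chi}(G-e)<{\rm es}_{\chi}(G)$ for every edge $e$. $G$ is $(3,2)$-critical if it is edge-stability critical with $\chi(G)=3$ and ${\rm es}_{\chi}(G)=2$. *)

(* Defs.v *)
From mathcomp Require Import all_boot.
Set Implicit Arguments. Unset Strict Implicit. Unset Printing Implicit Defensive.

Definition simple_graph (V : finType) (E : {set {set V}}) : Prop :=
  forall e, e \in E -> #|e| = 2.

Definition proper_coloring (V : finType) (k : nat) (E : {set {set V}})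
  (c : {ffun V -> 'I_k}) : bool :=
  [forall e in E, forall x in e, forall y in e, (x != y) ==> (c x != c y)].

Definition colorable (V : finType) (k : nat) (E : {set {set V}}) : bool :=
  [exists c : {ffun V -> 'I_k}, proper_coloring E c].

(* chromatic number: least k (<= |V|, always attained) with a proper k-colouring *)
Definition chi (V : finType) (E : {set {set V}}) : nat :=
  \big[minn/#|V|]_(k < #|V|.+1 | colorable k E) (k : nat).

Definition es_chi (V : finType) (E : {set {set V}}) : nat :=
  \big[minn/#|E|.+1]_(F : {set {set V}} | (F \subset E) && (chi (E :\: F) == (chi E).-1)) #|F|.

Definition edge_stability_critical (V : finType) (E : {set {set V}}) : Prop :=
  forall e, e \in E -> es_chi (E :\ e) < es_chi E.

Definition crit32 (V : finType) (E : {set {set V}}) : Prop :=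
  [/\ edge_stability_critical E, chi E = 3 & es_chi E = 2].

Definition cycle_edges (V : finType) (s : seq V) : {set {set V}} :=
  [set [set x; next s x] | x in s].

Definition odd_cycle_in (V : finType) (E : {set {set V}}) (C : {set {set V}}) : Prop :=
  C \subset E /\
  exists s : seq V, [/\ uniq s, 3 <= size s, odd (size s) & C = cycle_edges s].

(* Main.v *)
Require Import Defs.
From mathcomp Require Import all_boot zify.
Set Implicit Arguments. Unset Strict Implicit. Unset Printing Implicit Defensive.

Section Gen.
Variable V : finType.
Implicit Types (E F : {set {set V}}).

Lemma bigmin_le (I : finType) (P : pred I) (G : I -> nat) d i :
  P i -> \big[minn/d]_(j | P j) G j <= G i.
Proof.
move=> Pi; have : i \in index_enum I by rewrite mem_index_enum.
elim: (index_enum I) => [|y r IH] //; rewrite inE big_cons.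
case/orP => [/eqP <-|ir]; first by rewrite Pi geq_minl.
case: ifP => _; last exact: IH.
by rewrite geq_min IH ?orbT.
Qed.

Lemma bigmin_ge (I : finType) (P : pred I) (G : I -> nat) d k :
  k <= d -> (forall i, P i -> k <= G i) -> k <= \big[minn/d]_(j | P j) G j.
Proof. by move=> kd kG; elim/big_ind: _ => // x y; rewrite leq_min => -> ->. Qed.

Lemma bigmin_in (I : finType) (P : pred I) (G : I -> nat) d (K : nat -> Prop) :
  K d -> (forall i, P i -> K (G i)) -> K (\big[minn/d]_(j | P j) G j).
Proof. by move=> Kd KG; elim/big_ind: _ => // x y Kx Ky; rewrite /minn; case: ifP. Qed.

Lemma colorable_sub k E F : F \subset E -> colorable k E -> colorable k F.
Proof.
move=> FE /existsP[c Hc]; apply/existsP; exists c.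
apply/forallP => e; apply/implyP => eF.
by move/forallP: Hc => /(_ e); rewrite (subsetP FE) .
Qed.

Lemma colorable_mono j k E : j <= k -> colorable j E -> colorable k E.
Proof.
move=> jk /existsP[c Hc]; apply/existsP; exists [ffun x => widen_ord jk (c x)].
apply/forallP => e; apply/implyP => eE.
move/forallP: Hc => /(_ e) /implyP /(_ eE) /forall_inP H.
apply/forall_inP => x xe; apply/forall_inP => y ye; apply/implyP => xy.
move/H: xe => /forall_inP /(_ y ye) /implyP /(_ xy).
by rewrite !ffunE; apply: contra => /eqP [/val_inj ->].
Qed.

Lemma colorable_card E : colorable #|V| E.
Proof.
apply/existsP; exists [ffun x => enum_rank x].
apply/forallP => e; apply/implyP => eE.
apply/forall_inP => x xe; apply/forall_inP => y ye; apply/implyP => xy.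
by rewrite !ffunE; apply: contra xy => /eqP /enum_rank_inj ->.
Qed.

Lemma chi_le k E : colorable k E -> k <= #|V| -> chi E <= k.
Proof.
move=> ck kV; rewrite /chi.
have := @bigmin_le _ (fun i : 'I_#|V|.+1 => colorable i E) (fun i => i : nat) #|V|
  (Ordinal (kV : k < #|V|.+1)); apply; exact ck.
Qed.

Lemma chi_col E : colorable (chi E) E.
Proof.
rewrite /chi; apply: (@bigmin_in _ _ _ _ (fun m => colorable m E)).
  exact: colorable_card.
by move=> i.
Qed.

Lemma chi_leV E : chi E <= #|V|.
Proof. exact: chi_le (colorable_card E) (leqnn _). Qed.

Lemma chi_eq k E : colorable k E -> ~~ colorable k.-1 E -> k <= #|V| -> chi E = k.
Proof.
move=> ck nck kV; apply/eqP; rewrite eqn_leq chi_le //=.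
case: k ck nck kV => [|k] ck nck kV; first by rewrite ck in nck.
rewrite ltnNge; apply/negP => le; move: nck; rewrite /=.
by rewrite (colorable_mono le (chi_col E)).
Qed.


Definition adj E : rel V := fun x y => [set x; y] \in E.
Definition proper2 E (b : V -> bool) := forall e, e \in E ->
  forall x y, x \in e -> y \in e -> x != y -> b x != b y.

Lemma simple_sub E F : simple_graph E -> F \subset E -> simple_graph F.
Proof. by move=> sE FE e eF; apply: sE; apply: (subsetP FE). Qed.

Lemma adj_neq E x y : simple_graph E -> adj E x y -> x != y.
Proof. by move=> sE /sE; rewrite cards2; case: (x != y). Qed.

Lemma adj_sym E : symmetric (adj E).
Proof. by move=> x y; rewrite /adj setUC. Qed.

Lemma adj_flip E b x y : simple_graph E -> proper2 E b -> adj E x y -> b y = ~~ b x.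
Proof.
move=> sE pb xy; have := pb _ xy x y (set21 _ _) (set22 _ _) (adj_neq sE xy).
by case: (b x); case: (b y).
Qed.

Lemma path_par E b : simple_graph E -> proper2 E b ->
  forall x p, path (adj E) x p -> b (last x p) = b x (+) odd (size p).
Proof.
move=> sE pb x p; elim: p x => [|y p IH] x /=; first by rewrite addbF.
case/andP => xy /IH ->; rewrite (adj_flip sE pb xy).
by case: (b x); case: (odd (size p)).
Qed.

Lemma walk_even E b w : simple_graph E -> proper2 E b -> cycle (adj E) w -> ~~ odd (size w).
Proof.
move=> sE pb; case: w => [|x p] //= /(path_par sE pb).
rewrite last_rcons size_rcons /=.
by case: (b x); case: (odd (size p)).
Qed.

Lemma col2_proper E : colorable 2 E -> exists b, proper2 E b.
Proof.
case/existsP => c Hc; exists (fun x => c x == ord0) => e eE x y xe ye xy.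
move/forallP: Hc => /(_ e) /implyP /(_ eE) /forall_inP /(_ x xe)
  /forall_inP /(_ y ye) /implyP /(_ xy).
case: (c x) => [[|[|i]] Hi] //; case: (c y) => [[|[|j]] Hj] //.
Qed.

Lemma proper_col2 E b : proper2 E b -> colorable 2 E.
Proof.
move=> pb; apply/existsP.
exists [ffun x => if b x then (ord_max : 'I_2) else ord0].
apply/forallP => e; apply/implyP => eE.
apply/forall_inP => x xe; apply/forall_inP => y ye; apply/implyP => xy.
have := pb e eE x y xe ye xy; rewrite !ffunE.
by case: (b x); case: (b y).
Qed.

Lemma edge2 (e : {set V}) x y : #|e| = 2 -> x \in e -> y \in e -> x != y -> e = [set x; y].
Proof.
move=> ce xe ye xy; apply/eqP; rewrite eq_sym eqEcard cards2 xy ce leqnn andbT.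
by apply/subsetP => z; rewrite !inE => /orP[] /eqP ->.
Qed.


Lemma dup_split (w : seq V) : ~~ uniq w -> exists a x b c, w = a ++ x :: b ++ x :: c.
Proof.
elim: w => [|y w IH] //=; rewrite negb_and negbK; case: (boolP (y \in w)) => yw /=.
  by move=> _; case/splitPr: yw => b c; exists [::], y, b, c.
by case/IH => a [x [b [c ->]]]; exists (y :: a), x, b, c.
Qed.

Lemma walk_cycle E : simple_graph E -> forall w, cycle (adj E) w -> odd (size w) ->
  exists s, [/\ uniq s, 3 <= size s, odd (size s) & cycle_edges s \subset E].
Proof.
move=> sE w; move: {2}(size w) (leqnn (size w)) => n; elim: n w => [|n IH] w.
  by rewrite leqn0 => /eqP ->.
move=> wn cw ow; case: (boolP (uniq w)) => uw.
  exists w; split => //.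
    case: w wn cw ow {uw} => [|x [|y [|z t]]] //= _.
    by rewrite andbT => /(adj_neq sE); rewrite eqxx.
  apply/subsetP => e /imsetP [x xw ->]; exact: (next_cycle cw xw).
case/dup_split: uw => a [x [b [c Hw]]].
have cw' : cycle (adj E) (x :: b ++ x :: (c ++ a)).
  by move: cw; rewrite -(rot_cycle (size a)) Hw rot_size_cat /= -catA.
move: cw'; rewrite /= rcons_cat cat_path /= => /and3P [pb lb pca].
have c1 : cycle (adj E) (x :: b) by rewrite /= rcons_path pb lb.
have c2 : cycle (adj E) (x :: (c ++ a)) by rewrite /= pca.
have sz : size w = size (x :: b) + size (x :: (c ++ a)).
  rewrite Hw /= !size_cat /= size_cat /=; lia.
have l1 : size (x :: b) <= n by move: wn; rewrite sz /= size_cat; lia.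
have l2 : size (x :: (c ++ a)) <= n by move: wn; rewrite sz /= size_cat; lia.
move: ow; rewrite sz oddD; case o1: (odd (size (x :: b))) => /= o2.
  exact: IH l1 c1 o1.
exact: IH l2 c2 o2.
Qed.


Lemma adj_subrel E F : F \subset E -> subrel (adj F) (adj E).
Proof. by move=> FE x y; rewrite /adj => /(subsetP FE). Qed.

Lemma color_or_walk E : simple_graph E ->
  (exists b, proper2 E b) \/ (exists w, cycle (adj E) w /\ odd (size w)).
Proof.
move: {2}#|E| (leqnn #|E|) => n; elim: n E => [|n IH] E cE sE.
  left; exists (fun _ => true) => e; move: cE; rewrite leqn0 cards_eq0 => /eqP ->.
  by rewrite in_set0.
case: (boolP (E == set0)) => [/eqP -> | /set0Pn [e eE]].
  by left; exists (fun _ => true) => e; rewrite in_set0.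
have /eqP /cards2P [u [v [uv De]]] := sE e eE.
set E' := E :\ e.
have E'E : E' \subset E by apply: subD1set.
have sE' := simple_sub sE E'E.
have cE' : #|E'| <= n by move: cE; rewrite (cardsD1 e E) eE.
have subp := sub_path (adj_subrel E'E).
case: (IH E' cE' sE') => [[b pb] | [w [cw ow]]]; last first.
  right; exists w; split => //; case: w cw {ow} => [|x p] //=; exact: subp.
have pbE : forall f, f \in E -> f != e -> forall x y, x \in f -> y \in f -> x != y ->
    b x != b y.
  by move=> f fE fne; apply: pb; rewrite !inE fne fE.
case: (boolP (b u == b v)) => buv; last first.
  left; exists b => f fE x y xf yf xy; case: (boolP (f == e)) => [/eqP fe | fne].
    move: xf yf xy; rewrite fe De => /set2P [] -> /set2P [] ->; rewrite ?eqxx // => _.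
      by apply: contra buv => /eqP ->.
  exact: pbE fE fne x y xf yf xy.
case: (boolP (connect (adj E') u v)) => cuv.
  right; case/connectP: cuv => p pp vl; exists (u :: p); split.
    rewrite /= rcons_path subp //= -vl /adj setUC -De //.
  have := path_par sE' pb pp; rewrite -vl (eqP buv) /=.
  by case: (b v); case: (odd (size p)).
left; exists (fun x => b x (+) connect (adj E') u x).
move=> f fE x y xf yf xy; case: (boolP (f == e)) => [/eqP fe | fne].
  move: xf yf xy; rewrite fe De => /set2P [] -> /set2P [] -> //; rewrite ?eqxx // => _;
  rewrite connect0 (negbTE cuv) (eqP buv); by case: (b v).
have fE' : f \in E' by rewrite !inE fne fE.
have fxy : f = [set x; y] by apply: edge2 (sE f fE) xf yf xy.
have axy : adj E' x y by rewrite /adj -fxy.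
have cxy : connect (adj E') u y = connect (adj E') u x.
  apply/idP/idP => H; apply: (connect_trans H (connect1 _)) => //.
  by rewrite adj_sym.
rewrite cxy; have := pb f fE' x y xf yf xy.
by case: (b x); case: (b y); case: (connect _ _ _).
Qed.


Lemma T2 E : simple_graph E -> (forall C, odd_cycle_in E C -> False) -> colorable 2 E.
Proof.
move=> sE noc; case: (color_or_walk sE) => [[b pb] | [w [cw ow]]].
  exact: proper_col2 pb.
case: (walk_cycle sE cw ow) => s [us ss os sub].
by case: (noc (cycle_edges s)); split => //; exists s.
Qed.

Lemma next_facts (s : seq V) x : uniq s -> 3 <= size s -> x \in s ->
  next s x != x /\ next s (next s x) != x.
Proof.
move=> us ss xs; case: (rot_to xs) => i s' Hr.
rewrite -!(next_rot i us) Hr.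
have : uniq (x :: s') by rewrite -Hr rot_uniq.
have : 3 <= size (x :: s') by rewrite -Hr size_rot.
case: s' {Hr} => [|a [|b t]] //= _.
rewrite !inE !negb_or => /andP [/and3P [xa xb _] /andP [/andP [ab _] _]].
rewrite /next /= eqxx /= eq_sym (negbTE xa) /= eqxx /=.
by split; rewrite // eq_sym.
Qed.

Lemma cyc_inj (s : seq V) : uniq s -> 3 <= size s ->
  {in s &, injective (fun x => [set x; next s x])}.
Proof.
move=> us ss x y xs ys /= exy; case: (eqVneq x y) => // xy.
have [n1 n2] := next_facts us ss xs.
have : y \in [set x; next s x] by rewrite exy set21.
case/set2P => [yx | yn]; first by rewrite yx eqxx in xy.
have : x \in [set y; next s y] by rewrite -exy set21.
case/set2P => [xy' | xn]; first by rewrite xy' eqxx in xy.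
by move: n2; rewrite -yn -xn eqxx.
Qed.

Lemma card_cut (s : seq V) (K : {set {set V}}) : uniq s -> 3 <= size s ->
  #|cycle_edges s :&: K| = count (fun x => [set x; next s x] \in K) s.
Proof.
move=> us ss.
have -> : cycle_edges s :&: K = (fun x => [set x; next s x]) @:
    [set x | (x \in s) && ([set x; next s x] \in K)].
  apply/setP => e; rewrite !inE; apply/andP/imsetP.
    by case => /imsetP [x xs ->] eK; exists x => //; rewrite inE xs eK.
  case => x; rewrite inE => /andP [xs xK] ->; split => //; apply/imsetP; exists x => //.
rewrite card_in_imset; last first.
  by move=> x y; rewrite !inE => /andP[xs _] /andP[ys _]; apply: cyc_inj.
rewrite -size_filter.
have /card_uniqP <- := filter_uniq (fun x => [set x; next s x] \in K) us.
by apply: eq_card => x; rewrite inE mem_filter andbC.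
Qed.

Lemma card_cyc (s : seq V) : uniq s -> 3 <= size s -> #|cycle_edges s| = size s.
Proof.
move=> us ss; rewrite -(setIT (cycle_edges s)) card_cut //.
by rewrite -[RHS](count_predT s); apply: eq_count => x; rewrite inE.
Qed.

Definition cutset (b : V -> bool) : {set {set V}} :=
  [set e : {set V} | [exists x in e, exists y in e, b x != b y]].

Lemma in_cut_edge x y b : ([set x; y] \in cutset b) = (b x != b y).
Proof.
rewrite inE; apply/existsP/idP.
  case => x' /andP [/set2P x'in /existsP [y' /andP [/set2P y'in ne]]].
  by case: x'in y'in ne => -> [] ->; rewrite ?eqxx // eq_sym.
move=> ne; exists x; rewrite set21 /=; apply/existsP; exists y; by rewrite set22.
Qed.

Lemma odd_count_xor (a1 a2 : pred V) r :
  odd (count (fun x => a1 x (+) a2 x) r) = odd (count a1 r) (+) odd (count a2 r).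
Proof.
elim: r => [|x r IH] //=; rewrite !oddD IH.
by case: (a1 x); case: (a2 x); case: (odd (count a1 r)); case: (odd (count a2 r)).
Qed.

Lemma cyc_cut_even (s : seq V) b : uniq s -> 3 <= size s ->
  ~~ odd #|cycle_edges s :&: cutset b|.
Proof.
move=> us ss; rewrite card_cut //.
have -> : count (fun x => [set x; next s x] \in cutset b) s =
          count (fun x => b x (+) b (next s x)) s.
  by apply: eq_count => x; rewrite in_cut_edge; case: (b x); case: (b (next s x)).
rewrite odd_count_xor.
have pm : perm_eq (map (next s) s) s.
  apply: uniq_perm => //; first by rewrite (map_inj_uniq (can_inj (prev_next us))).
  move=> y; rewrite -{1}(next_prev us y) (mem_map (can_inj (prev_next us))) mem_prev //.
have -> : count (fun x => b (next s x)) s = count b s.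
  by rewrite -(permP pm b) count_map.
by case: (odd _).
Qed.

Definition sd (X Y : {set {set V}}) := (X :\: Y) :|: (Y :\: X).

Lemma in_sd X Y e : (e \in sd X Y) = (e \in X) (+) (e \in Y).
Proof. by rewrite !inE; case: (e \in X); case: (e \in Y). Qed.

Lemma sdI X Y K : sd X Y :&: K = sd (X :&: K) (Y :&: K).
Proof.
apply/setP => e; rewrite inE !in_sd !inE.
by case: (e \in X); case: (e \in Y); case: (e \in K).
Qed.

Lemma odd_sd X Y : odd #|sd X Y| = odd #|X| (+) odd #|Y|.
Proof.
rewrite /sd cardsU.
have -> : (X :\: Y) :&: (Y :\: X) = set0.
  by apply/setP => e; rewrite !inE; case: (e \in X); case: (e \in Y).
rewrite cards0 subn0 -(cardsID Y X) -(cardsID X Y) setIC !oddD.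
by case: (odd #|_|); case: (odd #|_|); case: (odd #|_|).
Qed.


Lemma oc_facts E (C : {set {set V}}) : odd_cycle_in E C ->
  [/\ C \subset E, odd #|C|, 3 <= #|V|, 0 < #|C| & forall b, ~~ odd #|C :&: cutset b|].
Proof.
case=> CE [s [us ss os eC]]; rewrite eC in CE *; split => //.
- by rewrite card_cyc.
- by apply: leq_trans ss _; rewrite -(card_uniqP us) max_card.
- by rewrite card_cyc //; apply: leq_trans ss.
- by move=> b; apply: cyc_cut_even.
Qed.

Lemma sub_cut E E2 b (C : {set {set V}}) : simple_graph E -> E2 \subset E -> proper2 E2 b ->
  C \subset E2 -> C :&: cutset b = C.
Proof.
move=> sE E2E pb CE2; apply/setIidPl/subsetP => e eC.
have eE2 := subsetP CE2 e eC.
have /eqP /cards2P [x [y [xy De]]] := sE e (subsetP E2E e eE2).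
rewrite De in_cut_edge; apply: (pb e eE2) => //; rewrite De ?set21 ?set22 //.
Qed.

Lemma oc_T1 E E2 (C : {set {set V}}) : simple_graph E -> odd_cycle_in E C -> C \subset E2 ->
  E2 \subset E -> colorable 2 E2 -> False.
Proof.
move=> sE oC CE2 E2E /col2_proper [b pb].
have [_ oddC _ _ cutC] := oc_facts oC.
by move: (cutC b); rewrite (sub_cut sE E2E pb CE2) oddC.
Qed.

Lemma es_witness E : es_chi E < 2 -> 0 < #|E| ->
  exists F, [/\ F \subset E, chi (E :\: F) = (chi E).-1 & #|F| < 2].
Proof.
move=> es cE.
case: (boolP [exists F : {set {set V}},
   [&& F \subset E, chi (E :\: F) == (chi E).-1 & #|F| < 2]]).
  by case/existsP => F /and3P [FE /eqP ch cF]; exists F.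
move/existsPn => H; move: es; rewrite ltnNge => /negP []; rewrite /es_chi.
apply: bigmin_ge => // F /andP [FE ch]; move: (H F); rewrite FE ch /=.
by rewrite -leqNgt.
Qed.

Lemma es_le E F : F \subset E -> chi (E :\: F) = (chi E).-1 -> es_chi E <= #|F|.
Proof.
move=> FE ch; rewrite /es_chi.
by apply: (@bigmin_le _ (fun F => (F \subset E) && (chi (E :\: F) == (chi E).-1))
  (fun F => #|F|)); rewrite FE ch eqxx.
Qed.

Lemma sub_case E (Ci Ck : {set {set V}}) g : simple_graph E -> crit32 E ->
  odd_cycle_in E Ci -> odd_cycle_in E Ck ->
  (forall x, x \in Ci -> x \in Ck -> False) ->
  g \in E -> g \notin Ci -> g \notin Ck -> False.
Proof.
move=> sE [crit chi3 es2] oi ok disj gE gi gk.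
have [CiE _ V3 _ _] := oc_facts oi.
have [CkE _ _ ck0 _] := oc_facts ok.
set E' := E :\ g.
have E'E : E' \subset E by apply: subD1set.
have sub' : forall C : {set {set V}}, C \subset E -> g \notin C -> C \subset E'.
  move=> C CE gC; apply/subsetP => x xC; rewrite !inE (subsetP CE x xC) andbT.
  by apply: contraNneq gC => <-.
have CkE' := sub' Ck CkE gk.
have chi3' : chi E' = 3.
  apply: chi_eq => //.
    by apply: colorable_sub E'E _; rewrite -chi3; apply: chi_col.
  by apply/negP => c2; apply: (oc_T1 sE ok CkE' E'E c2).
have es' := crit g gE; rewrite es2 -/E' in es'.
have cE' : 0 < #|E'| by apply: leq_trans ck0 (subset_leq_card CkE').
case: (es_witness es' cE') => F [FE' chF cF].
rewrite chi3' /= in chF.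
have c2 : colorable 2 (E' :\: F) by rewrite -chF; apply: chi_col.
have E2E : E' :\: F \subset E by apply: subset_trans (subsetDl _ _) E'E.
have inF : forall C : {set {set V}}, odd_cycle_in E C -> C \subset E -> g \notin C ->
    exists2 y, y \in C & y \in F.
  move=> C oC CE gC; case: (boolP (C \subset E' :\: F)) => [CE2 | /subsetPn [y yC yn]].
    by case: (oc_T1 sE oC CE2 E2E c2).
  exists y => //; move: yn; rewrite !inE (subsetP CE y yC) andbT.
  have -> : (y != g) by apply: contraNneq gC => <-.
  by case: (y \in F).
case: (inF Ci oi CiE gi) => y yi yF.
case: (inF Ck ok CkE gk) => z zk zF.
have /card_le1P H : #|F| <= 1 by [].
have := H y yF z; rewrite zF inE => /esym /eqP zy.
by apply: (disj y yi); rewrite -zy.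
Qed.

Lemma key E (Ci Cj Ck : {set {set V}}) : simple_graph E -> crit32 E ->
  odd_cycle_in E Ci -> odd_cycle_in E Cj -> odd_cycle_in E Ck ->
  (forall x, x \in Ci -> x \in Cj -> False) ->
  (forall x, x \in Ci -> x \in Ck -> False) -> Cj != Ck -> False.
Proof.
move=> sE cr oi oj ok dij dik; rewrite eqEsubset negb_and.
have [CjE _ _ _ _] := oc_facts oj.
have [CkE _ _ _ _] := oc_facts ok.
case/orP => /subsetPn [g g1 g2].
  apply: (sub_case sE cr oi ok dik (subsetP CjE g g1)) => //.
  by apply/negP => gi; apply: (dij g gi g1).
apply: (sub_case sE cr oi oj dij (subsetP CkE g g1)) => //.
by apply/negP => gi; apply: (dik g gi g1).
Qed.


Lemma no_triple E (C1 C2 C3 : {set {set V}}) x : simple_graph E -> crit32 E ->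
  odd_cycle_in E C1 -> odd_cycle_in E C2 -> odd_cycle_in E C3 ->
  (forall C, odd_cycle_in E C -> C = C1 \/ C = C2 \/ C = C3) ->
  x \in C1 -> x \in C2 -> x \in C3 -> False.
Proof.
move=> sE [crit chi3 es2] o1 o2 o3 all x1 x2 x3.
have [C1E oddC1 V3 _ _] := oc_facts o1.
set E' := E :\ x.
have E'E : E' \subset E by apply: subD1set.
have c2 : colorable 2 E'.
  apply: T2; first exact: simple_sub sE E'E.
  move=> C [CE' oC]; have oCE : odd_cycle_in E C by split => //; apply: subset_trans CE' E'E.
  have xC : x \in C by case: (all C oCE) => [->|[->|->]].
  by move: (subsetP CE' x xC); rewrite !inE eqxx.
have ch2 : chi E' = 2.
  apply: chi_eq => //=; last by apply: leq_trans V3.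
  apply/negP => /existsP [c Hc].
  have : 1 < #|C1 :\ x|.
    by move: oddC1 (oc_facts o1) => _ [_ _ _ _ _]; move: (cardsD1 x C1); rewrite x1;
       have [_ oC _ _ _] := oc_facts o1; case: o1 => _ [s [us ss _ ->]] in oC *;
       rewrite card_cyc // => H; lia.
  move=> /ltnW; rewrite card_gt0 => /set0Pn [e]; rewrite !inE => /andP [ex eC1].
  have eE' : e \in E' by rewrite !inE ex (subsetP C1E e eC1).
  have /eqP /cards2P [u [v [uv De]]] := sE e (subsetP C1E e eC1).
  move/forallP: Hc => /(_ e) /implyP /(_ eE') /forall_inP /(_ u).
  rewrite De set21 => /(_ isT) /forall_inP /(_ v) /(_ (set22 _ _)) /implyP /(_ uv).
  by case: (c u) => [[|i] Hi]; case: (c v) => [[|j] Hj].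
have : es_chi E <= #|[set x]|.
  by apply: es_le; rewrite ?sub1set ?(subsetP C1E x x1) // ch2 chi3.
by rewrite es2 cards1.
Qed.

End Gen.

Theorem theorem2p4 (V : finType) (E : {set {set V}}) :
  simple_graph E -> crit32 E ->
  ~ (exists C1 C2 C3 : {set {set V}},
        [/\ odd_cycle_in E C1, odd_cycle_in E C2, odd_cycle_in E C3,
            [/\ C1 != C2, C1 != C3 & C2 != C3] &
            forall C, odd_cycle_in E C -> C = C1 \/ C = C2 \/ C = C3]).
Proof.
move=> sE cr [C1 [C2 [C3 [o1 o2 o3 [n12 n13 n23] all]]]].
have nt := no_triple sE cr o1 o2 o3 all.
have [C1E odd1 _ _ cut1] := oc_facts o1.
have [C2E odd2 _ _ cut2] := oc_facts o2.
have [C3E odd3 _ _ cut3] := oc_facts o3.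
set H := sd (sd C1 C2) C3.
have inH : forall e, (e \in H) = (e \in C1) (+) (e \in C2) (+) (e \in C3).
  by move=> e; rewrite !in_sd.
have HE : H \subset E.
  apply/subsetP => e; rewrite inH.
  case e1: (e \in C1); first by rewrite (subsetP C1E e e1).
  case e2: (e \in C2); first by rewrite (subsetP C2E e e2).
  by move=> /= e3; rewrite (subsetP C3E e e3).
have sH := simple_sub sE HE.
have [s [us ss os sH']] : exists s, [/\ uniq s, 3 <= size s, odd (size s) &
    cycle_edges s \subset H].
  case: (color_or_walk sH) => [[b pb] | [w [cw ow]]]; last first. exact: (walk_cycle sH cw ow).
  have cutH := sub_cut sE HE pb (subxx H).
  have : odd #|H| by rewrite /H !odd_sd odd1 odd2 odd3.
  rewrite -cutH /H !sdI !odd_sd.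
  by move: (cut1 b) (cut2 b) (cut3 b); do 3 case: (odd _).
have oC : odd_cycle_in E (cycle_edges s).
  by split; [apply: subset_trans sH' HE | exists s].
have CH := subsetP sH'.
case: (all _ oC) => [eC|[eC|eC]]; rewrite eC in CH.
- apply: (key sE cr o1 o2 o3 _ _ n23) => x xi xj; apply: (nt x) => //;
    move: (CH x xi); rewrite inH xi xj //=; by case: (x \in _).
- apply: (key sE cr o2 o1 o3 _ _ n13) => x xi xj.
  + by apply: (nt x) => //; move: (CH x xi); rewrite inH xi xj /=; case: (x \in C3).
  + by apply: (nt x) => //; move: (CH x xi); rewrite inH xi xj /=; case: (x \in C1).
- apply: (key sE cr o3 o1 o2 _ _ n12) => x xi xj.
  + by apply: (nt x) => //; move: (CH x xi); rewrite inH xi xj /=; case: (x \in C2).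
  + by apply: (nt x) => //; move: (CH x xi); rewrite inH xi xj /=; case: (x \in C1).
Qed.
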